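(* For every integer $n\ge1$, $$\sum_{k=1}^n\frac{(-1)^k}{k^2\binom{2n}{k}}=H_{2n}^{(2)}+\frac32\sum_{k=1}^{n}\frac{(-1)^k}{k^2\binom{2k}{k}}-2\sum_{k=1}^{n}\frac{(-1)^k}{k\binom{2k}{k}}+4\sum_{k=1}^{n}\frac{(-1)^k}{(2k-1)\binom{2k}{k}}.$$
   Context: $H_m^{(2)}=\sum_{j=1}^m 1/j^2$. *)

(* Defs.v *)
From mathcomp Require Import all_boot all_order all_algebra.
Set Implicit Arguments. Unset Strict Implicit. Unset Printing Implicit Defensive.
Import Order.TTheory GRing.Theory Num.Theory.
Local Open Scope ring_scope.

Definition H2 (m : nat) : rat := \sum_(1 <= j < m.+1) 1 / (j%:R ^+ 2).

(* Main.v *)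
Require Import Defs.
From mathcomp Require Import all_boot all_order all_algebra.
From mathcomp Require Import ring lra zify.
Import Order.TTheory GRing.Theory Num.Theory.
Local Open Scope ring_scope.

Definition Fs (n k : nat) : rat := (-1) ^+ k / ((k%:R ^+ 2) * ('C(2 * n, k))%:R).
Definition Nn (n : nat) : rat := (2 * n%:R + 1) * (2 * n%:R + 2).
Definition ca (n : nat) : rat := 1 / (2 * (n%:R + 1) * Nn n).
Definition cc (n : nat) : rat := (4 * n%:R + 3) / Nn n.
Definition cb (n : nat) : rat := - ((6 * n%:R + 3) / Nn n + ca n) / (2 * n%:R + 1).
Definition Gs (n k : nat) : rat :=
  (-1) ^+ k * (ca n * k%:R ^+ 2 + cb n * k%:R + cc n) / (k%:R * ('C(2 * n, k))%:R).

Lemma t2n n : ((2 * n)%:R : rat) = 2 * n%:R.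
Proof. by rewrite natrM. Qed.
Lemma t2n1 n : (((2 * n).+1)%:R : rat) = 2 * n%:R + 1.
Proof. by rewrite -natr1 natrM. Qed.
Lemma t2n2 n : (((2 * n).+2)%:R : rat) = 2 * n%:R + 2.
Proof. by rewrite -natr1 t2n1 -addrA. Qed.
Lemma tS k : ((k.+1)%:R : rat) = k%:R + 1.
Proof. by rewrite -natr1. Qed.

Lemma stepk n k : (1 <= k)%N -> (k <= n)%N -> Fs n.+1 k - Fs n k = Gs n k.+1 - Gs n k.
Proof.
move=> k1 kn.
have h1 := mul_bin_down (2 * n).+1 k.
have h2 := mul_bin_down (2 * n).+2 k.
have h3 := mul_bin_left (2 * n) k.
rewrite /= in h1 h2.
have e2 : (2 * n.+1 = (2 * n).+2)%N by lia.
rewrite /Fs /Gs e2.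
have cpos : (0 < 'C(2 * n, k))%N by rewrite bin_gt0; lia.
have dpos : (0 < 'C((2 * n).+1, k))%N by rewrite bin_gt0; lia.
have epos : (0 < 'C((2 * n).+2, k))%N by rewrite bin_gt0; lia.
move: h1 h2 h3 cpos dpos epos.
set c := 'C(2 * n, k); set d := 'C((2 * n).+1, k); set e := 'C((2 * n).+2, k);
set f := 'C(2 * n, k.+1).
move=> h1 h2 h3 cpos dpos epos.
have R1 : (((2*n).+1)%:R : rat) * c%:R = ((2*n).+1 - k)%:R * d%:R by rewrite -!natrM h1.
have R2 : (((2*n).+2)%:R : rat) * d%:R = ((2*n).+2 - k)%:R * e%:R by rewrite -!natrM h2.
have R3 : ((k.+1)%:R : rat) * f%:R = ((2*n) - k)%:R * c%:R by rewrite -!natrM h3.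
rewrite natrB in R1; last lia.
rewrite natrB in R2; last lia.
rewrite natrB in R3; last lia.
rewrite t2n1 in R1; rewrite t2n2 in R2; rewrite t2n tS in R3; rewrite tS.
have c0 : (c%:R : rat) != 0 by rewrite pnatr_eq0 -lt0n.
have d0 : (d%:R : rat) != 0 by rewrite pnatr_eq0 -lt0n.
have e0 : (e%:R : rat) != 0 by rewrite pnatr_eq0 -lt0n.
have kn' : (k%:R : rat) <= n%:R by rewrite ler_nat.
have k1' : (1 : rat) <= k%:R by rewrite ler1n.
move: c0 d0 e0 kn' k1' R1 R2 R3.
rewrite /cb /ca /cc /Nn.
set K : rat := k%:R; set M : rat := n%:R; set C : rat := c%:R; set D : rat := d%:R;
set E : rat := e%:R; set FF : rat := f%:R.
move=> c0 d0 e0 kn' k1' R1 R2 R3.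
clearbody K M C D E FF.
have nz1 : K + 1 != 0 by apply/negP => /eqP; lra.
have nz2 : 2 * M + 1 - K != 0 by apply/negP => /eqP; lra.
have nz3 : 2 * M + 2 - K != 0 by apply/negP => /eqP; lra.
have nz4 : 2 * M - K != 0 by apply/negP => /eqP; lra.
have nz5 : K != 0 by apply/negP => /eqP; lra.
have nz6 : M + 1 != 0 by apply/negP => /eqP; lra.
have nz7 : 2 * M + 1 != 0 by apply/negP => /eqP; lra.
have nz8 : 2 * M + 2 != 0 by apply/negP => /eqP; lra.
have HF : FF = (2 * M - K) * C / (K + 1).
  by rewrite -R3; field.
have HD : D = (2 * M + 1) * C / (2 * M + 1 - K).
  by rewrite R1; field.
have HE : E = (2 * M + 2) * D / (2 * M + 2 - K).
  by rewrite R2; field.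
rewrite HF HE HD [(-1) ^+ k.+1]exprS.
move: ((-1) ^+ k : rat) => s.
field.
by rewrite !(nz1, nz2, nz3, nz4, nz5, nz6, nz7, nz8, c0).
Qed.
Definition Lsum n := \sum_(1 <= k < n.+1) Fs n k.

Lemma Lstep n : (1 <= n)%N -> Lsum n.+1 - Lsum n = Fs n.+1 n.+1 + Gs n n.+1 - Gs n 1.
Proof.
move=> n1; rewrite /Lsum big_nat_recr //=.
have -> : \sum_(1 <= k < n.+1) Fs n.+1 k + Fs n.+1 n.+1 - \sum_(1 <= k < n.+1) Fs n k
  = Fs n.+1 n.+1 + \sum_(1 <= k < n.+1) (Fs n.+1 k - Fs n k) by rewrite sumrB; ring.
rewrite (@telescope_sumr_eq _ _ _ (Gs n)) //; first by ring.
move=> k /andP [k1 kn]; apply: stepk => //.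
Qed.

Lemma Dstep n : (1 <= n)%N ->
  Fs n.+1 n.+1 + Gs n n.+1 - Gs n 1 =
  1 / ((((2 * n).+1)%:R) ^+ 2) + 1 / ((((2 * n).+2)%:R) ^+ 2)
  + 3 / 2 * ((-1) ^+ n.+1 / (((n.+1)%:R ^+ 2) * ('C(2 * n.+1, n.+1))%:R))
  - 2 * ((-1) ^+ n.+1 / ((n.+1)%:R * ('C(2 * n.+1, n.+1))%:R))
  + 4 * ((-1) ^+ n.+1 / (((2 * n.+1)%:R - 1) * ('C(2 * n.+1, n.+1))%:R)).
Proof.
move=> n1.
have h1 := mul_bin_down (2 * n).+1 n.+1.
have h2 := mul_bin_down (2 * n).+2 n.+1.
rewrite /= in h1 h2.
have e2 : (2 * n.+1 = (2 * n).+2)%N by lia.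
have b1 := bin1 (2 * n).
rewrite /Fs /Gs e2 b1.
have gpos : (0 < 'C((2 * n).+2, n.+1))%N by rewrite bin_gt0; lia.
have dpos : (0 < 'C((2 * n).+1, n.+1))%N by rewrite bin_gt0; lia.
move: h1 h2 gpos dpos.
set f := 'C(2 * n, n.+1); set d := 'C((2 * n).+1, n.+1); set g := 'C((2 * n).+2, n.+1).
move=> h1 h2 gpos dpos.
have R1 : (((2*n).+1)%:R : rat) * f%:R = ((2*n).+1 - n.+1)%:R * d%:R by rewrite -!natrM h1.
have R2 : (((2*n).+2)%:R : rat) * d%:R = ((2*n).+2 - n.+1)%:R * g%:R by rewrite -!natrM h2.
have E1 : ((2 * n).+1 - n.+1 = n)%N by lia.
rewrite E1 in R1.
have E2 : ((2 * n).+2 - n.+1 = n.+1)%N by lia.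
rewrite E2 in R2.
rewrite t2n1 in R1; rewrite t2n2 [(n.+1)%:R]tS in R2; rewrite t2n2 t2n1 ![(n.+1)%:R]tS t2n !mul1r.
have d0 : (d%:R : rat) != 0 by rewrite pnatr_eq0 -lt0n.
have g0 : (g%:R : rat) != 0 by rewrite pnatr_eq0 -lt0n.
have n1' : (1 : rat) <= n%:R by rewrite ler1n.
move: d0 g0 n1' R1 R2.
rewrite /cb /ca /cc /Nn.
set M : rat := n%:R; set FF : rat := f%:R; set D : rat := d%:R; set Gg : rat := g%:R.
move=> d0 g0 n1' R1 R2.
clearbody M FF D Gg.
have nz6 : M + 1 != 0 by apply/negP => /eqP; lra.
have nz7 : 2 * M + 1 != 0 by apply/negP => /eqP; lra.
have nz8 : 2 * M + 2 != 0 by apply/negP => /eqP; lra.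
have nz9 : M != 0 by apply/negP => /eqP; lra.
have nz10 : 2 * M + 2 - 1 != 0 by apply/negP => /eqP; lra.
have HF : FF = M * D / (2 * M + 1).
  by rewrite -R1; field.
have HD : D = (M + 1) * Gg / (2 * M + 2).
  by rewrite -R2; field.
rewrite HF HD [(-1) ^+ n.+1]exprS expr1.
move: ((-1) ^+ n : rat) => s.
field.
by rewrite g0 nz6 nz8 nz9 nz10.
Qed.

Lemma H2S m : H2 m.+2 = H2 m + 1 / ((m.+1)%:R ^+ 2) + 1 / ((m.+2)%:R ^+ 2).
Proof. by rewrite /H2 (big_nat_recr m.+2) // (big_nat_recr m.+1). Qed.

Theorem mainTheorem12 (n : nat) : (1 <= n)%N ->
  \sum_(1 <= k < n.+1) ((-1) ^+ k / ((k%:R ^+ 2) * ('C(2 * n, k))%:R) : rat)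
  = H2 (2 * n)
    + 3 / 2 * \sum_(1 <= k < n.+1) ((-1) ^+ k / ((k%:R ^+ 2) * ('C(2 * k, k))%:R) : rat)
    - 2 * \sum_(1 <= k < n.+1) ((-1) ^+ k / (k%:R * ('C(2 * k, k))%:R) : rat)
    + 4 * \sum_(1 <= k < n.+1) ((-1) ^+ k / (((2 * k)%:R - 1) * ('C(2 * k, k))%:R) : rat).
Proof.
elim: n => [//|n IH] _.
case: n IH => [|n] IH.
  rewrite /H2 (big_nat_recr 2) // !big_nat1.
  apply/eqP; vm_compute; reflexivity.
move: (IH isT); rewrite -[LHS]/(Lsum n.+1) => IH'.
have L := Lstep n.+1 isT.
have D := Dstep n.+1 isT.
rewrite -[LHS]/(Lsum n.+2).
have e : (2 * n.+2 = (2 * n.+1).+2)%N by lia.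
rewrite [in X in H2 X]e H2S.
rewrite (big_nat_recr n.+2) // (big_nat_recr n.+2) // (big_nat_recr n.+2) //=.
have -> : Lsum n.+2 = Lsum n.+1 + (Lsum n.+2 - Lsum n.+1) by rewrite addrC subrK.
rewrite L D IH'.
move: ((-1) ^+ n.+2 : rat) => s.
set A := \sum_(1 <= k < n.+2) _.
set B := \sum_(1 <= k < n.+2) _.
set C := \sum_(1 <= k < n.+2) _.
set H := H2 _.
move: (s / _) (s / _) (s / _) (1 / _) (1 / _) => x1 x2 x3 x4 x5.
ring.
Qed.
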